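(* Let $\mathcal{S}$ be a set of Turing degrees and let $\mathbb{R}_{\mathcal{S}}$ be the set of reals whose Turing degree lies in $\mathcal{S}$. Then $\mathbb{R}_{\mathcal{S}}$ is a subfield of $\mathbb{R}$ if and only if $\mathcal{S}$ is a nonempty ideal, i.e. $\mathcal{S}$ is nonempty, closed under finite joins $\oplus$, and closed downward under $\le_T$.
   Context: Turing reducibility between reals is the usual one; $\oplus$ denotes the Turing join. *)

(* Defs.v *)
From Stdlib Require Import Reals Arith Cantor List.
Open Scope R_scope.

(* Sets of naturals are predicates nat -> Prop (no decidability assumed). *)

Inductive code : Type :=
| CZero : code
| CSucc : code
| CProj : nat -> code               (* i-th argument (0 if absent) *)
| COrac : code
| CComp : code -> list code -> code
| CPrec : code -> code -> code
| CMu   : code -> code.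

Inductive eval (O : nat -> Prop) : code -> list nat -> nat -> Prop :=
| ev_zero v : eval O CZero v 0
| ev_succ x v : eval O CSucc (x :: v) (S x)
| ev_proj i v : eval O (CProj i) v (nth i v 0%nat)
| ev_orac_in x v : O x -> eval O COrac (x :: v) 1
| ev_orac_out x v : ~ O x -> eval O COrac (x :: v) 0
| ev_comp f gs v ws y :
    evals O gs v ws -> eval O f ws y -> eval O (CComp f gs) v y
| ev_prec0 f g v y : eval O f v y -> eval O (CPrec f g) (0%nat :: v) y
| ev_precS f g n v y z :
    eval O (CPrec f g) (n :: v) y -> eval O g (n :: y :: v) z ->
    eval O (CPrec f g) (S n :: v) z
| ev_mu f v n :
    eval O f (n :: v) 0 ->
    (forall m, (m < n)%nat -> exists k, eval O f (m :: v) (S k)) ->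
    eval O (CMu f) v n
with evals (O : nat -> Prop) : list code -> list nat -> list nat -> Prop :=
| evs_nil v : evals O nil v nil
| evs_cons g gs v w ws : eval O g v w -> evals O gs v ws -> evals O (g :: gs) v (w :: ws).

Definition turing_le (A B : nat -> Prop) : Prop :=
  exists e : code, forall n : nat,
    (A n -> eval B e (n :: nil) 1) /\ (~ A n -> eval B e (n :: nil) 0).

Definition turing_equiv (A B : nat -> Prop) : Prop := turing_le A B /\ turing_le B A.

Definition tjoin (A B : nat -> Prop) : nat -> Prop :=
  fun n => if Nat.even n then A (Nat.div2 n) else B (Nat.div2 n).

(* Fixed computable enumeration of Q: n |-> (a,b) (Cantor), numerator from a via
   the zigzag bijection nat -> Z, denominator b+1. *)
Definition zig (a : nat) : Z :=
  if Nat.even a then Z.of_nat (Nat.div2 a) else (- Z.of_nat (S (Nat.div2 a)))%Z.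

Definition rat_of_nat (n : nat) : R :=
  let (a, b) := Cantor.of_nat n in IZR (zig a) / INR (S b).

Definition cut (x : R) : nat -> Prop := fun n => rat_of_nat n < x.

(* A set of Turing degrees is represented as a predicate on sets of naturals
   that is invariant under Turing equivalence. *)
Definition degree_set (S : (nat -> Prop) -> Prop) : Prop :=
  forall A B, turing_equiv A B -> S A -> S B.

Definition degree_ideal (S : (nat -> Prop) -> Prop) : Prop :=
  (exists A, S A) /\
  (forall A B, S A -> S B -> S (tjoin A B)) /\
  (forall A B, S B -> turing_le A B -> S A).

Definition reals_of (S : (nat -> Prop) -> Prop) : R -> Prop := fun x => S (cut x).

Definition is_subfield (F : R -> Prop) : Prop :=
  F 0 /\ F 1 /\
  (forall x y, F x -> F y -> F (x + y)) /\
  (forall x, F x -> F (- x)) /\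
  (forall x y, F x -> F y -> F (x * y)) /\
  (forall x, F x -> x <> 0 -> F (/ x)).

(* Main.v *)
Require Import Defs.
From Stdlib Require Import Reals.
From Stdlib Require Import Lia Lra Arith List ClassicalEpsilon Cantor ZArith.
Import ListNotations.

Local Open Scope nat_scope.

Definition chi (O : nat -> Prop) (x : nat) : nat :=
  if excluded_middle_informative (O x) then 1 else 0.

Lemma chi_in O x : O x -> chi O x = 1.
Proof. unfold chi; destruct excluded_middle_informative; tauto. Qed.
Lemma chi_out O x : ~ O x -> chi O x = 0.
Proof. unfold chi; destruct excluded_middle_informative; tauto. Qed.
Lemma chi_cases O x : (O x /\ chi O x = 1) \/ (~ O x /\ chi O x = 0).
Proof. unfold chi; destruct excluded_middle_informative; tauto. Qed.

Definition comp O c (f : list nat -> nat) := forall v, eval O c v (f v).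
Definition C O f := exists c, comp O c f.

Lemma C_ext O f g : C O f -> (forall v, f v = g v) -> C O g.
Proof. intros [c H] E; exists c; intro v; rewrite <- E; apply H. Qed.

Lemma C_zero O : C O (fun _ => 0).
Proof. exists CZero; intro v; constructor. Qed.

Lemma C_proj O i : C O (fun v => nth i v 0).
Proof. exists (CProj i); intro v; constructor. Qed.

Lemma C_S O f : C O f -> C O (fun v => S (f v)).
Proof.
  intros [c H]; exists (CComp CSucc [c]); intro v.
  econstructor. constructor. apply H. constructor. constructor.
Qed.

Lemma C_orac O f : C O f -> C O (fun v => chi O (f v)).
Proof.
  intros [c H]; exists (CComp COrac [c]); intro v.
  econstructor. constructor. apply H. constructor.
  destruct (chi_cases O (f v)) as [[h e]|[h e]]; rewrite e; constructor; auto.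
Qed.

Lemma C_list O Gs : Forall (C O) Gs ->
  exists cs, forall v, evals O cs v (map (fun G => G v) Gs).
Proof.
  induction 1 as [|G Gs [c Hc] _ [cs Hcs]].
  - exists nil; intro; constructor.
  - exists (c :: cs); intro v; simpl; constructor; auto.
Qed.

Lemma C_compl O F Gs : C O F -> Forall (C O) Gs ->
  C O (fun v => F (map (fun G => G v) Gs)).
Proof.
  intros [c H] HG; destruct (C_list O Gs HG) as [cs Hcs].
  exists (CComp c cs); intro v; econstructor; eauto.
Qed.

Fixpoint Rec (F G : list nat -> nat) (n : nat) (w : list nat) : nat :=
  match n with 0 => F w | S k => G (k :: Rec F G k w :: w) end.

Lemma C_prec O F G H Ps : C O F -> C O G -> C O H -> Forall (C O) Ps ->
  C O (fun v => Rec F G (H v) (map (fun P => P v) Ps)).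
Proof.
  intros [cf HF] [cg HG] [ch HH] HP; destruct (C_list O Ps HP) as [cs Hcs].
  exists (CComp (CPrec cf cg) (ch :: cs)); intro v; econstructor.
  - constructor; [apply HH | apply Hcs].
  - generalize (H v); intro n; induction n; simpl.
    + constructor; apply HF.
    + econstructor; [apply IHn | apply HG].
Qed.

Lemma least_ex (P : nat -> Prop) : (exists n, P n) ->
  exists n, P n /\ forall m, m < n -> ~ P m.
Proof.
  intros [n Hn]. revert Hn. induction n as [n IH] using (well_founded_induction lt_wf).
  intro Hn. destruct (classic (exists m, m < n /\ P m)) as [[m [Hm Pm]]|Hno].
  - exact (IH m Hm Pm).
  - exists n; split; auto. intros m Hm Pm; apply Hno; eauto.
Qed.

Definition Mu (F : list nat -> nat) (v : list nat) : nat :=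
  match excluded_middle_informative
    (exists n, F (n :: v) = 0 /\ forall m, m < n -> F (m :: v) <> 0) with
  | left H => proj1_sig (constructive_indefinite_description _ H)
  | right _ => 0 end.

Lemma Mu_spec F v : (exists n, F (n :: v) = 0) ->
  F (Mu F v :: v) = 0 /\ forall m, m < Mu F v -> F (m :: v) <> 0.
Proof.
  intro E. apply least_ex in E. unfold Mu.
  destruct excluded_middle_informative as [H|H]; [|tauto].
  destruct (constructive_indefinite_description _ H); simpl; auto.
Qed.

Lemma C_mu O F : C O F -> (forall v, exists n, F (n :: v) = 0) -> C O (Mu F).
Proof.
  intros [c H] E; exists (CMu c); intro v.
  destruct (Mu_spec F v (E v)) as [H1 H2].
  constructor.
  - rewrite <- H1; apply H.
  - intros m Hm. specialize (H2 m Hm). destruct (F (m :: v)) eqn:Eq; [congruence|].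
    exists n; rewrite <- Eq; apply H.
Qed.

Lemma C_comp1 O F G1 : C O F -> C O G1 -> C O (fun v => F [G1 v]).
Proof.
  intros HF H1. apply (C_compl O F [G1] HF); auto.
Qed.
Lemma C_comp2 O F G1 G2 : C O F -> C O G1 -> C O G2 -> C O (fun v => F [G1 v; G2 v]).
Proof.
  intros HF H1 H2. apply (C_compl O F [G1; G2] HF); auto.
Qed.

Lemma C_const O n : C O (fun _ => n).
Proof. induction n. apply C_zero. apply (C_S O (fun _ => n)); auto. Qed.

Lemma C_nth O i : C O (fun v => nth i v 0).
Proof. apply C_proj. Qed.

Lemma C_add O f g : C O f -> C O g -> C O (fun v => f v + g v).
Proof.
  intros Hf Hg.
  eapply C_ext. apply (C_prec O (fun w => nth 0 w 0) (fun w => S (nth 1 w 0)) g [f]).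
  apply C_proj. apply C_S, C_proj. auto. auto.
  intro v; simpl. induction (g v); simpl; lia.
Qed.

Lemma C_pred O f : C O f -> C O (fun v => pred (f v)).
Proof.
  intros Hf.
  eapply C_ext. apply (C_prec O (fun w => 0) (fun w => nth 0 w 0) f []).
  apply C_zero. apply C_proj. auto. auto.
  intro v; simpl. destruct (f v); simpl; auto.
Qed.

Lemma C_sub O f g : C O f -> C O g -> C O (fun v => f v - g v).
Proof.
  intros Hf Hg.
  eapply C_ext. apply (C_prec O (fun w => nth 0 w 0) (fun w => pred (nth 1 w 0)) g [f]).
  apply C_proj. apply C_pred, C_proj. auto. auto.
  intro v; simpl. induction (g v); simpl; lia.
Qed.

Lemma C_mul O f g : C O f -> C O g -> C O (fun v => f v * g v).
Proof.
  intros Hf Hg.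
  eapply C_ext. apply (C_prec O (fun w => 0) (fun w => nth 1 w 0 + nth 2 w 0) g [f]).
  apply C_zero. apply C_add; apply C_proj. auto. auto.
  intro v; simpl. induction (g v); simpl; lia.
Qed.

Definition ifz (n x y : nat) := match n with 0 => x | S _ => y end.

Lemma C_ifz O f g h : C O f -> C O g -> C O h -> C O (fun v => ifz (f v) (g v) (h v)).
Proof.
  intros Hf Hg Hh.
  eapply C_ext. apply (C_prec O (fun w => nth 0 w 0) (fun w => nth 3 w 0) f [g; h]).
  apply C_proj. apply C_proj. auto. auto.
  intro v; simpl. destruct (f v); simpl; auto.
Qed.

Definition b2n (b : bool) := if b then 1 else 0.

Lemma C_even O f : C O f -> C O (fun v => b2n (Nat.even (f v))).
Proof.
  intros Hf.
  eapply C_ext. apply (C_prec O (fun w => 1) (fun w => 1 - nth 1 w 0) f []).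
  apply C_const. apply C_sub. apply C_const. apply C_proj. auto. auto.
  intro v; cbn [map]. induction (f v). reflexivity. cbn [Rec nth].
  rewrite IHn, Nat.even_succ, <- Nat.negb_even.
  destruct (Nat.even n); reflexivity.
Qed.

Lemma div2_S n : Nat.div2 (S n) = Nat.div2 n + (1 - b2n (Nat.even n)).
Proof.
  induction n as [n IH] using (well_founded_induction lt_wf).
  destruct n as [|[|n]]; simpl; auto.
  specialize (IH n ltac:(lia)). simpl in IH. rewrite IH.
  destruct (Nat.even n); simpl; lia.
Qed.

Lemma C_div2 O f : C O f -> C O (fun v => Nat.div2 (f v)).
Proof.
  intros Hf.
  eapply C_ext. apply (C_prec O (fun w => 0)
     (fun w => nth 1 w 0 + (1 - b2n (Nat.even (nth 0 w 0)))) f []).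
  apply C_zero. apply C_add. apply C_proj. apply C_sub. apply C_const.
  apply C_even, C_proj. auto. auto.
  intro v; cbn [map]. induction (f v). reflexivity. cbn [Rec nth]. rewrite IHn, div2_S. reflexivity.
Qed.

Lemma C_pow4 O f : C O f -> C O (fun v => 4 ^ (f v)).
Proof.
  intros Hf.
  eapply C_ext. apply (C_prec O (fun w => 1) (fun w => 4 * nth 1 w 0) f []).
  apply C_const. apply C_mul. apply C_const. apply C_proj. auto. auto.
  intro v; simpl. induction (f v); simpl; lia.
Qed.

Definition tri (s : nat) : nat := nat_rec _ 0 (fun i m => S i + m) s.

Lemma C_tri O f : C O f -> C O (fun v => tri (f v)).
Proof.
  intros Hf.
  eapply C_ext. apply (C_prec O (fun w => 0) (fun w => S (nth 0 w 0) + nth 1 w 0) f []).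
  apply C_zero. apply C_add. apply C_S, C_proj. apply C_proj. auto. auto.
  intro v; simpl. induction (f v); simpl; auto.
Qed.

Lemma to_nat_eq x y : to_nat (x, y) = y + tri (y + x).
Proof. reflexivity. Qed.

Lemma C_tonat O f g : C O f -> C O g -> C O (fun v => to_nat (f v, g v)).
Proof.
  intros Hf Hg. eapply C_ext; [|intro v; symmetry; apply to_nat_eq].
  apply C_add; auto. apply C_tri, C_add; auto.
Qed.
Definition Fc (w : list nat) := S (nth 1 w 0) - tri (S (nth 0 w 0)).
Definition cs n := Mu Fc [n].

Lemma tri_S s : tri (S s) = S s + tri s.
Proof. reflexivity. Qed.

Lemma cs_spec n : tri (cs n) <= n < tri (S (cs n)).
Proof.
  destruct (Mu_spec Fc [n]) as [H1 H2].
  - exists n. unfold Fc; simpl nth. rewrite tri_S. lia.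
  - fold (cs n) in H1, H2. unfold Fc in H1; simpl nth in H1. split; [|lia].
    destruct (cs n) as [|k] eqn:E. simpl; lia.
    specialize (H2 k ltac:(lia)). unfold Fc in H2; simpl nth in H2. lia.
Qed.

Lemma of_nat_eq n : of_nat n = (cs n - (n - tri (cs n)), n - tri (cs n)).
Proof.
  apply to_nat_inj. rewrite cancel_to_of, to_nat_eq.
  pose proof (cs_spec n) as [H1 H2]. rewrite tri_S in H2.
  replace (n - tri (cs n) + (cs n - (n - tri (cs n)))) with (cs n) by lia. lia.
Qed.

Lemma C_cs O f : C O f -> C O (fun v => cs (f v)).
Proof.
  intro Hf. unfold cs. apply (C_comp1 O (Mu Fc) f); auto.
  apply C_mu. unfold Fc. apply C_sub. apply C_S, C_proj. apply C_tri, C_S, C_proj.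
  intro v. exists (nth 0 v 0). unfold Fc; simpl nth. rewrite tri_S. lia.
Qed.

Lemma C_fst O f : C O f -> C O (fun v => fst (of_nat (f v))).
Proof.
  intro Hf. eapply C_ext; [|intro v; rewrite of_nat_eq; reflexivity]. simpl.
  apply C_sub. apply C_cs; auto. apply C_sub; auto. apply C_tri, C_cs; auto.
Qed.

Lemma C_snd O f : C O f -> C O (fun v => snd (of_nat (f v))).
Proof.
  intro Hf. eapply C_ext; [|intro v; rewrite of_nat_eq; reflexivity]. simpl.
  apply C_sub; auto. apply C_tri, C_cs; auto.
Qed.

Fixpoint subst (e : code) (c : code) : code :=
  match c with
  | COrac => CComp e [CProj 0]
  | CComp f gs => CComp (subst e f) (map (subst e) gs)
  | CPrec f g => CPrec (subst e f) (subst e g)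
  | CMu f => CMu (subst e f)
  | c => c
  end.


Fixpoint se (B O : nat -> Prop) (e : code)
  (He : forall n, (B n -> eval O e [n] 1) /\ (~ B n -> eval O e [n] 0))
  (c : code) (v : list nat) (y : nat) (H : eval B c v y) {struct H} :
  eval O (subst e c) v y :=
  match H in eval _ c v y return eval O (subst e c) v y with
  | ev_zero _ v => ev_zero O v
  | ev_succ _ x v => ev_succ O x v
  | ev_proj _ i v => ev_proj O i v
  | ev_orac_in _ x v h => ev_comp O e [CProj 0] (x :: v) [x] 1
       (evs_cons O (CProj 0) [] (x :: v) x [] (ev_proj O 0 (x :: v)) (evs_nil O (x :: v)))
       (proj1 (He x) h)
  | ev_orac_out _ x v h => ev_comp O e [CProj 0] (x :: v) [x] 0
       (evs_cons O (CProj 0) [] (x :: v) x [] (ev_proj O 0 (x :: v)) (evs_nil O (x :: v)))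
       (proj2 (He x) h)
  | ev_comp _ f gs v ws y Hs Hf =>
      ev_comp O (subst e f) (map (subst e) gs) v ws y (ses B O e He gs v ws Hs) (se B O e He f ws y Hf)
  | ev_prec0 _ f g v y Hf => ev_prec0 O _ _ v y (se B O e He _ _ _ Hf)
  | ev_precS _ f g n v y z H1 H2 =>
      ev_precS O _ _ n v y z (se B O e He _ _ _ H1) (se B O e He _ _ _ H2)
  | ev_mu _ f v n H0 Hm =>
      ev_mu O _ v n (se B O e He _ _ _ H0)
        (fun m hm => match Hm m hm with ex_intro _ k hk => ex_intro _ k (se B O e He _ _ _ hk) end)
  end
with ses (B O : nat -> Prop) (e : code)
  (He : forall n, (B n -> eval O e [n] 1) /\ (~ B n -> eval O e [n] 0))
  (gs : list code) (v : list nat) (ws : list nat) (H : evals B gs v ws) {struct H} :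
  evals O (map (subst e) gs) v ws :=
  match H in evals _ gs v ws return evals O (map (subst e) gs) v ws with
  | evs_nil _ v => evs_nil O v
  | evs_cons _ g gs v w ws Hg Hgs =>
      evs_cons O _ _ v w ws (se B O e He _ _ _ Hg) (ses B O e He _ _ _ Hgs)
  end.

Lemma tle_trans A B O : turing_le A B -> turing_le B O -> turing_le A O.
Proof.
  intros [c Hc] [e He]. exists (subst e c). intro n; split; intro h;
  apply (se B O e He); apply Hc; auto.
Qed.

Lemma C_tle A O f : C O f -> (forall n, A n -> f [n] = 1) -> (forall n, ~ A n -> f [n] = 0) ->
  turing_le A O.
Proof.
  intros [c Hc] H1 H0. exists c; intro n; split; intro h.
  rewrite <- (H1 n h); apply Hc. rewrite <- (H0 n h); apply Hc.
Qed.

Lemma C_chi A O f : turing_le A O -> C O f -> C O (fun v => chi A (f v)).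
Proof.
  intros [e He] [c Hc]. exists (CComp e [c]); intro v. econstructor.
  constructor. apply Hc. constructor.
  destruct (chi_cases A (f v)) as [[h E]|[h E]]; rewrite E; apply He; auto.
Qed.

Lemma tle_refl A : turing_le A A.
Proof.
  apply (C_tle A A (fun v => chi A (nth 0 v 0))). apply C_orac, C_proj.
  intros; simpl; apply chi_in; auto. intros; simpl; apply chi_out; auto.
Qed.

Lemma even_2n n : Nat.even (2 * n) = true.
Proof. apply Nat.even_mul. Qed.
Lemma even_2n1 n : Nat.even (S (2 * n)) = false.
Proof. rewrite Nat.even_succ, <- Nat.negb_even, even_2n; reflexivity. Qed.
Lemma div2_2n n : Nat.div2 (2 * n) = n.
Proof. apply Nat.div2_double. Qed.
Lemma div2_2n1 n : Nat.div2 (S (2 * n)) = n.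
Proof. apply Nat.div2_succ_double. Qed.

Lemma tjoin_l A B : turing_le A (tjoin A B).
Proof.
  apply (C_tle A _ (fun v => chi (tjoin A B) (2 * nth 0 v 0))).
  apply C_orac, C_mul; [apply C_const|apply C_proj].
  - intros n h; simpl nth; apply chi_in; unfold tjoin; rewrite even_2n, div2_2n; auto.
  - intros n h; simpl nth; apply chi_out; unfold tjoin; rewrite even_2n, div2_2n; auto.
Qed.

Lemma tjoin_r A B : turing_le B (tjoin A B).
Proof.
  apply (C_tle B _ (fun v => chi (tjoin A B) (S (2 * nth 0 v 0)))).
  apply C_orac, C_S, C_mul; [apply C_const|apply C_proj].
  - intros n h; simpl nth; apply chi_in; unfold tjoin; rewrite even_2n1, div2_2n1; auto.
  - intros n h; simpl nth; apply chi_out; unfold tjoin; rewrite even_2n1, div2_2n1; auto.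
Qed.

Lemma tjoin_le A B O : turing_le A O -> turing_le B O -> turing_le (tjoin A B) O.
Proof.
  intros HA HB.
  apply (C_tle _ _ (fun v => ifz (b2n (Nat.even (nth 0 v 0)))
                        (chi B (Nat.div2 (nth 0 v 0))) (chi A (Nat.div2 (nth 0 v 0))))).
  - apply C_ifz. apply C_even, C_proj. apply C_chi; auto; apply C_div2, C_proj.
    apply C_chi; auto; apply C_div2, C_proj.
  - intros n h; simpl nth; unfold tjoin in h; destruct (Nat.even n); simpl; apply chi_in; auto.
  - intros n h; simpl nth; unfold tjoin in h; destruct (Nat.even n); simpl; apply chi_out; auto.
Qed.

Lemma empty_le O : turing_le (fun _ => False) O.
Proof.
  apply (C_tle _ _ (fun _ => 0)). apply C_zero. tauto. auto.
Qed.

Definition zp a := if Nat.even a then Nat.div2 a else 0.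
Definition zn a := if Nat.even a then 0 else S (Nat.div2 a).
Definition unz p m := if m <=? p then 2 * (p - m) else 2 * (m - p) - 1.
Definition Pn n := zp (fst (of_nat n)).
Definition Mn n := zn (fst (of_nat n)).
Definition Dn n := snd (of_nat n).
Definition mk p m d := to_nat (unz p m, d).

Lemma C_zp O f : C O f -> C O (fun v => zp (f v)).
Proof.
  intro Hf. eapply C_ext with (f := fun v => ifz (b2n (Nat.even (f v))) 0 (Nat.div2 (f v))).
  apply C_ifz. apply C_even; auto. apply C_zero. apply C_div2; auto.
  intro v; unfold zp; destruct (Nat.even (f v)); reflexivity.
Qed.
Lemma C_zn O f : C O f -> C O (fun v => zn (f v)).
Proof.
  intro Hf. eapply C_ext with (f := fun v => ifz (b2n (Nat.even (f v))) (S (Nat.div2 (f v))) 0).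
  apply C_ifz. apply C_even; auto. apply C_S, C_div2; auto. apply C_zero.
  intro v; unfold zn; destruct (Nat.even (f v)); reflexivity.
Qed.
Lemma C_unz O f g : C O f -> C O g -> C O (fun v => unz (f v) (g v)).
Proof.
  intros Hf Hg. eapply C_ext with (f := fun v => ifz (g v - f v) (2 * (f v - g v)) (2 * (g v - f v) - 1)).
  apply C_ifz. apply C_sub; auto. apply C_mul. apply C_const. apply C_sub; auto.
  apply C_sub. apply C_mul. apply C_const. apply C_sub; auto. apply C_const.
  intro v; unfold unz. destruct (g v <=? f v) eqn:E.
  apply Nat.leb_le in E. replace (g v - f v) with 0 by lia; reflexivity.
  apply Nat.leb_gt in E. destruct (g v - f v) eqn:E2; [lia|reflexivity].
Qed.
Lemma C_Pn O f : C O f -> C O (fun v => Pn (f v)).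
Proof. intro; apply C_zp, C_fst; auto. Qed.
Lemma C_Mn O f : C O f -> C O (fun v => Mn (f v)).
Proof. intro; apply C_zn, C_fst; auto. Qed.
Lemma C_Dn O f : C O f -> C O (fun v => Dn (f v)).
Proof. intro; apply C_snd; auto. Qed.
Lemma C_mk O f g h : C O f -> C O g -> C O h -> C O (fun v => mk (f v) (g v) (h v)).
Proof. intros; apply C_tonat; auto; apply C_unz; auto. Qed.

Local Open Scope R_scope.

Lemma zig_eq a : IZR (zig a) = INR (zp a) - INR (zn a).
Proof.
  unfold zig, zp, zn. destruct (Nat.even a).
  - rewrite <- INR_IZR_INZ. change (INR 0) with 0. lra.
  - rewrite opp_IZR, <- INR_IZR_INZ. change (INR 0) with 0. lra.
Qed.

Lemma rat_dec n : rat_of_nat n = (INR (Pn n) - INR (Mn n)) / INR (S (Dn n)).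
Proof.
  unfold rat_of_nat, Pn, Mn, Dn. destruct (of_nat n) as [a b]. simpl. rewrite zig_eq. reflexivity.
Qed.

Lemma unz_eq p m : INR (zp (unz p m)) - INR (zn (unz p m)) = INR p - INR m.
Proof.
  unfold unz. destruct (m <=? p) eqn:E.
  - apply Nat.leb_le in E. unfold zp, zn. rewrite even_2n, div2_2n.
    rewrite minus_INR by lia. change (INR 0) with 0. lra.
  - apply Nat.leb_gt in E. replace (2 * (m - p) - 1)%nat with (S (2 * (m - p - 1))) by lia.
    unfold zp, zn. rewrite even_2n1, div2_2n1. replace (S (m - p - 1)) with (m - p)%nat by lia.
    rewrite minus_INR by lia. change (INR 0) with 0. lra.
Qed.

Lemma rat_mk p m d : rat_of_nat (mk p m d) = (INR p - INR m) / INR (S d).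
Proof.
  unfold rat_of_nat, mk. rewrite cancel_of_to. rewrite zig_eq, unz_eq. reflexivity.
Qed.

Lemma INRS_pos d : 0 < INR (S d).
Proof. apply lt_0_INR; lia. Qed.

Lemma div_lt_iff a b c d : 0 < b -> 0 < d -> (a / b < c / d <-> a * d < c * b).
Proof.
  intros Hb Hd.
  assert (Ea : a = a / b * b) by (field; lra).
  assert (Ec : c = c / d * d) by (field; lra).
  set (u := a / b) in *; set (w := c / d) in *.
  clearbody u w. subst a c. assert (Hbd : 0 < b * d) by (apply Rmult_lt_0_compat; lra).
  split; intro H.
  - replace (w * d * b) with (u * b * d + (w - u) * (b * d)) by ring.
    assert (0 < (w - u) * (b * d)) by (apply Rmult_lt_0_compat; lra). lra.
  - destruct (Rlt_or_le u w) as [h|h]; auto.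
    assert (0 <= (u - w) * (b * d)) by (apply Rmult_le_pos; lra). nra.
Qed.

Lemma frac_lt p1 m1 d1 p2 m2 d2 :
  (INR p1 - INR m1) / INR (S d1) < (INR p2 - INR m2) / INR (S d2) <->
  (p1 * S d2 + m2 * S d1 < p2 * S d1 + m1 * S d2)%nat.
Proof.
  rewrite div_lt_iff by apply INRS_pos. split; intro H.
  - apply INR_lt. rewrite !plus_INR, !mult_INR. lra.
  - apply lt_INR in H. rewrite !plus_INR, !mult_INR in H. lra.
Qed.

Definition LT n1 n2 := (S (Pn n1 * S (Dn n2) + Mn n2 * S (Dn n1)) - (Pn n2 * S (Dn n1) + Mn n1 * S (Dn n2)))%nat.

Lemma LT_spec n1 n2 : LT n1 n2 = 0%nat <-> rat_of_nat n1 < rat_of_nat n2.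
Proof. rewrite !rat_dec, frac_lt. unfold LT. lia. Qed.

Lemma C_LT O f g : C O f -> C O g -> C O (fun v => LT (f v) (g v)).
Proof.
  intros Hf Hg; unfold LT.
  repeat first [apply C_sub | apply C_add | apply C_mul | apply C_S | apply C_Pn | apply C_Mn | apply C_Dn]; auto.
Qed.

Definition NEG n := mk (Mn n) (Pn n) (Dn n).
Lemma NEG_spec n : rat_of_nat (NEG n) = - rat_of_nat n.
Proof. unfold NEG; rewrite rat_mk, rat_dec. field. pose proof (INRS_pos (Dn n)); lra. Qed.

Definition INV n := mk (S (Dn n)) 0 (Pn n - Mn n - 1).
Lemma INV_spec n : (Mn n < Pn n)%nat -> rat_of_nat (INV n) = / rat_of_nat n.
Proof.
  intro H. unfold INV; rewrite rat_mk, rat_dec.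
  replace (S (Pn n - Mn n - 1)) with (Pn n - Mn n)%nat by lia.
  rewrite minus_INR by lia. change (INR 0) with 0.
  pose proof (INRS_pos (Dn n)). assert (INR (Mn n) < INR (Pn n)) by (apply lt_INR; auto).
  field. lra.
Qed.

Definition SUB n i := mk (Pn n * S (Dn i) + Mn i * S (Dn n)) (Pn i * S (Dn n) + Mn n * S (Dn i))
                         (S (Dn n) * S (Dn i) - 1).
Lemma SUB_spec n i : rat_of_nat (SUB n i) = rat_of_nat n - rat_of_nat i.
Proof.
  unfold SUB; rewrite rat_mk, !rat_dec.
  replace (S (S (Dn n) * S (Dn i) - 1)) with (S (Dn n) * S (Dn i))%nat by lia.
  rewrite !plus_INR, !mult_INR.
  pose proof (INRS_pos (Dn n)); pose proof (INRS_pos (Dn i)). field. lra.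
Qed.

Lemma C_NEG O f : C O f -> C O (fun v => NEG (f v)).
Proof. intro; unfold NEG; apply C_mk; [apply C_Mn|apply C_Pn|apply C_Dn]; auto. Qed.
Lemma C_INV O f : C O f -> C O (fun v => INV (f v)).
Proof.
  intro; unfold INV; apply C_mk. apply C_S, C_Dn; auto. apply C_zero.
  repeat apply C_sub; try apply C_const; [apply C_Pn|apply C_Mn]; auto.
Qed.
Lemma C_SUB O f g : C O f -> C O g -> C O (fun v => SUB (f v) (g v)).
Proof.
  intros Hf Hg; unfold SUB; apply C_mk;
  repeat first [apply C_sub | apply C_add | apply C_mul | apply C_S | apply C_Pn | apply C_Mn | apply C_Dn | apply C_const]; auto.
Qed.

Lemma Z_split z : INR (Z.to_nat z) - INR (Z.to_nat (- z)) = IZR z.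
Proof.
  destruct (Z_le_gt_dec 0 z).
  - replace (Z.to_nat (- z)) with 0%nat by lia. rewrite INR_IZR_INZ, Z2Nat.id by lia.
    change (INR 0) with 0. lra.
  - replace (Z.to_nat z) with 0%nat by lia. rewrite (INR_IZR_INZ (Z.to_nat (- z))), Z2Nat.id by lia.
    rewrite opp_IZR. change (INR 0) with 0. lra.
Qed.

Lemma density a b : a < b -> exists n, a < rat_of_nat n < b.
Proof.
  intro Hab.
  destruct (archimed (/ (b - a))) as [H1 _].
  assert (Hp : 0 < / (b - a)) by (apply Rinv_0_lt_compat; lra).
  set (N := up (/ (b - a))) in *.
  assert (HN : (0 < N)%Z) by (apply lt_IZR; lra).
  set (d := Z.to_nat N).
  assert (Hd : INR (S d) > / (b - a)).
  { rewrite S_INR. unfold d. rewrite INR_IZR_INZ, Z2Nat.id by lia. lra. }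
  assert (Hd' : INR (S d) * (b - a) > 1).
  { apply Rmult_gt_compat_r with (r := b - a) in Hd; [|lra].
    rewrite Rinv_l in Hd by lra. lra. }
  pose proof (INRS_pos d) as Hs.
  destruct (archimed (a * INR (S d))) as [K1 K2].
  exists (mk (Z.to_nat (up (a * INR (S d)))) (Z.to_nat (- up (a * INR (S d)))) d).
  rewrite rat_mk, Z_split. split.
  - apply Rmult_lt_reg_r with (INR (S d)); auto. unfold Rdiv. rewrite Rmult_assoc, Rinv_l by lra. lra.
  - apply Rmult_lt_reg_r with (INR (S d)); auto. unfold Rdiv. rewrite Rmult_assoc, Rinv_l by lra. lra.
Qed.

Lemma pos_iff n : 0 < rat_of_nat n <-> (Mn n < Pn n)%nat.
Proof.
  rewrite rat_dec. pose proof (INRS_pos (Dn n)).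
  split; intro H0.
  - apply INR_lt. apply Rmult_lt_compat_r with (r := INR (S (Dn n))) in H0; auto.
    unfold Rdiv in H0. rewrite Rmult_0_l, Rmult_assoc, Rinv_l in H0 by lra. lra.
  - apply lt_INR in H0. unfold Rdiv. apply Rmult_lt_0_compat. lra. apply Rinv_0_lt_compat; lra.
Qed.

Lemma cut_rat_le n0 O : turing_le (cut (rat_of_nat n0)) O.
Proof.
  apply (C_tle _ _ (fun v => ifz (LT (nth 0 v 0) n0) 1 0)%nat).
  - apply C_ifz. apply C_LT. apply C_proj. apply C_const. apply C_const. apply C_const.
  - intros n h; simpl nth. unfold cut in h. apply LT_spec in h. rewrite h; reflexivity.
  - intros n h; simpl nth. unfold cut in h. destruct (LT n n0) eqn:E; auto.
    apply LT_spec in E. tauto.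
Qed.

Lemma cut_neg_le x : (forall n, rat_of_nat n <> - x) -> turing_le (cut (- x)) (cut x).
Proof.
  intro Hx.
  apply (C_tle _ _ (fun v => 1 - chi (cut x) (NEG (nth 0 v 0)))%nat).
  - apply C_sub. apply C_const. apply C_orac, C_NEG, C_proj.
  - intros n h; simpl nth. unfold cut in h. rewrite chi_out. reflexivity.
    unfold cut. rewrite NEG_spec. lra.
  - intros n h; simpl nth. unfold cut in h. rewrite chi_in. reflexivity.
    unfold cut. rewrite NEG_spec. specialize (Hx n). lra.
Qed.

Lemma inv_lt_iff q x : 0 < q -> 0 < x -> (q < / x <-> x < / q).
Proof.
  intros Hq Hx.
  assert (E1 : x * / x = 1) by (field; lra). assert (E2 : q * / q = 1) by (field; lra).
  assert (P1 : 0 < / x) by (apply Rinv_0_lt_compat; auto).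
  assert (P2 : 0 < / q) by (apply Rinv_0_lt_compat; auto).
  set (a := / x) in *; set (b := / q) in *. clearbody a b.
  split; intro H; nra.
Qed.

Lemma cut_inv_le x : 0 < x -> (forall n, rat_of_nat n <> / x) -> turing_le (cut (/ x)) (cut x).
Proof.
  intros Hx0 Hx.
  apply (C_tle _ _ (fun v => ifz (S (Mn (nth 0 v 0)) - Pn (nth 0 v 0))
                               (1 - chi (cut x) (INV (nth 0 v 0))) 1)%nat).
  - apply C_ifz. apply C_sub. apply C_S, C_Mn, C_proj. apply C_Pn, C_proj.
    apply C_sub. apply C_const. apply C_orac, C_INV, C_proj. apply C_const.
  - intros n h; simpl nth. unfold cut in h.
    destruct (S (Mn n) - Pn n)%nat eqn:E; [|reflexivity].
    assert (HP : (Mn n < Pn n)%nat) by lia. pose proof HP as HP'. apply pos_iff in HP'.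
    rewrite chi_out. reflexivity. unfold cut. rewrite INV_spec by auto.
    apply inv_lt_iff in h; auto. lra.
  - intros n h; simpl nth. unfold cut in h.
    assert (Hi : 0 < / x) by (apply Rinv_0_lt_compat; auto).
    destruct (S (Mn n) - Pn n)%nat eqn:E.
    + assert (HP : (Mn n < Pn n)%nat) by lia. pose proof HP as HP'. apply pos_iff in HP'.
      rewrite chi_in. reflexivity. unfold cut. rewrite INV_spec by auto.
      assert (/ x < rat_of_nat n) by (specialize (Hx n); lra).
      destruct (Rlt_or_le (/ rat_of_nat n) x) as [h'|h']; auto.
      exfalso. destruct h' as [h'|h'].
      * apply inv_lt_iff in h'; auto; lra.
      * rewrite h' in H. rewrite Rinv_inv in H. lra.
    + exfalso. assert (~ (Mn n < Pn n)%nat) by lia. rewrite <- pos_iff in H. lra.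
Qed.

Lemma chi_tj_l A B i : chi (tjoin A B) (2 * i) = chi A i.
Proof. unfold chi, tjoin. rewrite even_2n, div2_2n. reflexivity. Qed.
Lemma chi_tj_r A B i : chi (tjoin A B) (S (2 * i)) = chi B i.
Proof. unfold chi, tjoin. rewrite even_2n1, div2_2n1. reflexivity. Qed.

Lemma fst_of_to i j : fst (of_nat (to_nat (i, j))) = i.
Proof. rewrite cancel_of_to; reflexivity. Qed.
Lemma snd_of_to i j : snd (of_nat (to_nat (i, j))) = j.
Proof. rewrite cancel_of_to; reflexivity. Qed.


Local Open Scope nat_scope.
Definition Yf T (w : list nat) : nat :=
  (chi T (2 * fst (of_nat (nth 0 w 0))) * chi T (S (2 * SUB (nth 1 w 0) (fst (of_nat (nth 0 w 0))))))%nat.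
Definition Nf T (w : list nat) : nat :=
  ifz (LT (fst (of_nat (nth 0 w 0))) (snd (of_nat (nth 0 w 0))))
      ((1 - chi T (2 * fst (of_nat (nth 0 w 0)))) *
       (1 - chi T (S (2 * SUB (nth 1 w 0) (snd (of_nat (nth 0 w 0)))))))%nat 0%nat.
Definition Ff T (w : list nat) : nat := (1 - (Yf T w + Nf T w))%nat.

Local Open Scope R_scope.
Ltac Csolve := repeat first [ apply C_proj | apply C_const | apply C_LT | apply C_SUB | apply C_fst | apply C_snd
  | apply C_Pn | apply C_Mn | apply C_Dn | apply C_NEG | apply C_INV | apply C_pow4 | apply C_mk
  | apply C_orac | apply C_ifz | apply C_sub | apply C_add | apply C_mul | apply C_S ].

Lemma C_Yf T : C T (Yf T).
Proof. unfold Yf; Csolve. Qed.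
Lemma C_Nf T : C T (Nf T).
Proof. unfold Nf; Csolve. Qed.
Lemma C_Ff T : C T (Ff T).
Proof. unfold Ff; apply C_sub. Csolve. apply C_add. apply C_Yf. apply C_Nf. Qed.

Lemma Yf_spec (x y : R) (k : nat) (v : list nat) :
  let T := tjoin (cut x) (cut y) in
  let i := fst (of_nat k) in let n := nth 0 v 0%nat in
  (Yf T (k :: v) = 1%nat /\ rat_of_nat i < x /\ rat_of_nat n - rat_of_nat i < y) \/
  (Yf T (k :: v) = 0%nat /\ ~ (rat_of_nat i < x /\ rat_of_nat n - rat_of_nat i < y)).
Proof.
  intros T i n. unfold Yf, T. cbn [nth]. rewrite chi_tj_l, chi_tj_r. fold i n.
  rewrite <- SUB_spec.
  destruct (chi_cases (cut x) i) as [[h1 e1]|[h1 e1]]; rewrite e1;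
  destruct (chi_cases (cut y) (SUB n i)) as [[h2 e2]|[h2 e2]]; rewrite e2; unfold cut in *;
  simpl; tauto.
Qed.

Lemma Nf_spec (x y : R) (k : nat) (v : list nat) :
  let T := tjoin (cut x) (cut y) in
  let i := fst (of_nat k) in let j := snd (of_nat k) in let n := nth 0 v 0%nat in
  Nf T (k :: v) <> 0%nat ->
  rat_of_nat i < rat_of_nat j /\ x <= rat_of_nat i /\ y <= rat_of_nat n - rat_of_nat j.
Proof.
  intros T i j n. unfold Nf, T. cbn [nth]. rewrite chi_tj_l, chi_tj_r. fold i j n.
  rewrite <- SUB_spec.
  destruct (LT i j) eqn:E; [|simpl; tauto]. apply LT_spec in E. simpl ifz.
  destruct (chi_cases (cut x) i) as [[h1 e1]|[h1 e1]]; rewrite e1;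
  destruct (chi_cases (cut y) (SUB n j)) as [[h2 e2]|[h2 e2]]; rewrite e2; unfold cut in *;
  simpl; intro H; try tauto. split; auto. lra.
Qed.

Lemma cut_add_le x y : (forall n, rat_of_nat n <> x + y) ->
  turing_le (cut (x + y)) (tjoin (cut x) (cut y)).
Proof.
  intro Hxy. set (T := tjoin (cut x) (cut y)).
  assert (Hterm : forall v, exists k, Ff T (k :: v) = 0%nat).
  { intro v. set (n := nth 0 v 0%nat). specialize (Hxy n).
    destruct (Rlt_or_le (rat_of_nat n) (x + y)) as [h|h].
    - destruct (density (rat_of_nat n - y) x) as [i [hi1 hi2]]; [lra|].
      exists (to_nat (i, 0%nat)). unfold Ff.
      destruct (Yf_spec x y (to_nat (i, 0%nat)) v) as [[e _]|[_ e]]; fold T in e |- *.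
      + rewrite e. lia.
      + exfalso; apply e; rewrite fst_of_to; unfold n in *; split; lra.
    - destruct (density x (rat_of_nat n - y)) as [i [hi1 hi2]]; [lra|].
      destruct (density (rat_of_nat i) (rat_of_nat n - y)) as [j [hj1 hj2]]; [lra|].
      exists (to_nat (i, j)). unfold Ff.
      assert (Nf T (to_nat (i, j) :: v) = 1%nat).
      { unfold Nf, T. cbn [nth]. rewrite chi_tj_l, chi_tj_r, fst_of_to, snd_of_to. fold n.
        destruct (LT i j) eqn:E. 2:{ exfalso. assert (LT i j = 0%nat) by (apply LT_spec; auto). lia. }
        rewrite chi_out, chi_out. reflexivity. unfold cut; rewrite SUB_spec; lra. unfold cut; lra. }
      rewrite H. lia. }
  apply (C_tle _ _ (fun v => Yf T [Mu (Ff T) [nth 0 v 0%nat]; nth 0 v 0%nat])).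
  - apply C_comp2. apply C_Yf. apply C_comp1. apply C_mu. apply C_Ff. auto. apply C_proj. apply C_proj.
  - intros n h. simpl nth. unfold cut in h.
    destruct (Mu_spec (Ff T) [n] (Hterm [n])) as [H0 _].
    set (k := Mu (Ff T) [n]) in *.
    destruct (Yf_spec x y k [n]) as [[e _]|[e _]]; fold T in e; auto.
    exfalso. unfold Ff in H0. rewrite e in H0.
    assert (HN : Nf T (k :: [n]) <> 0%nat) by lia.
    apply Nf_spec in HN. simpl nth in HN. lra.
  - intros n h. simpl nth. unfold cut in h.
    destruct (Mu_spec (Ff T) [n] (Hterm [n])) as [H0 _].
    set (k := Mu (Ff T) [n]) in *.
    destruct (Yf_spec x y k [n]) as [[e [h1 h2]]|[e _]]; fold T in e; auto.
    exfalso. simpl nth in h2. lra.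
Qed.

Lemma Frat_gen Sg p m d : degree_ideal Sg -> Sg (cut ((INR p - INR m) / INR (S d))).
Proof.
  intros [[A HA] [_ Hdown]]. rewrite <- rat_mk. apply (Hdown _ A HA). apply cut_rat_le.
Qed.

Lemma Frat Sg n : degree_ideal Sg -> Sg (cut (rat_of_nat n)).
Proof.
  intros [[A HA] [_ Hdown]]. apply (Hdown _ A HA). apply cut_rat_le.
Qed.

Lemma F0 Sg : degree_ideal Sg -> Sg (cut 0).
Proof.
  intro HI. replace 0 with ((INR 0 - INR 0) / INR 1). apply Frat_gen; auto.
  change (INR 0) with 0. change (INR 1) with 1. field.
Qed.

Lemma F1 Sg : degree_ideal Sg -> Sg (cut 1).
Proof.
  intro HI. replace 1 with ((INR 1 - INR 0) / INR 1). apply Frat_gen; auto.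
  change (INR 0) with 0. change (INR 1) with 1. field.
Qed.

Lemma Fadd Sg x y : degree_ideal Sg -> Sg (cut x) -> Sg (cut y) -> Sg (cut (x + y)).
Proof.
  intros HI Hx Hy. destruct (classic (exists n, rat_of_nat n = x + y)) as [[n E]|NE].
  - rewrite <- E; apply Frat; auto.
  - destruct HI as [_ [Hj Hd]]. apply (Hd _ _ (Hj _ _ Hx Hy)). apply cut_add_le.
    intros n E; apply NE; eauto.
Qed.

Lemma Fneg Sg x : degree_ideal Sg -> Sg (cut x) -> Sg (cut (- x)).
Proof.
  intros HI Hx. destruct (classic (exists n, rat_of_nat n = - x)) as [[n E]|NE].
  - rewrite <- E; apply Frat; auto.
  - destruct HI as [_ [Hj Hd]]. apply (Hd _ _ Hx). apply cut_neg_le.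
    intros n E; apply NE; eauto.
Qed.

Lemma Finv_pos Sg x : degree_ideal Sg -> 0 < x -> Sg (cut x) -> Sg (cut (/ x)).
Proof.
  intros HI Hp Hx. destruct (classic (exists n, rat_of_nat n = / x)) as [[n E]|NE].
  - rewrite <- E; apply Frat; auto.
  - destruct HI as [_ [Hj Hd]]. apply (Hd _ _ Hx). apply cut_inv_le; auto.
    intros n E; apply NE; eauto.
Qed.

Lemma Finv Sg x : degree_ideal Sg -> x <> 0 -> Sg (cut x) -> Sg (cut (/ x)).
Proof.
  intros HI Hn Hx. destruct (Rlt_or_le 0 x) as [h|h].
  - apply Finv_pos; auto.
  - replace (/ x) with (- / (- x)) by (field; auto).
    apply Fneg; auto. apply Finv_pos; auto. lra. apply Fneg; auto.
Qed.

Lemma Fsq Sg z : degree_ideal Sg -> Sg (cut z) -> Sg (cut (z * z)).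
Proof.
  intros HI Hz.
  destruct (Req_dec z 0) as [e|n0]. { subst. rewrite Rmult_0_l. apply F0; auto. }
  destruct (Req_dec z (-1)) as [e|n1]. { subst. replace (-1 * -1) with 1 by ring. apply F1; auto. }
  assert (Hz1 : z + 1 <> 0) by lra.
  assert (E : / z - / (z + 1) = / (z * (z + 1))) by (field; auto).
  replace (z * z) with (/ (/ z + - / (z + 1)) + - z).
  - apply Fadd; auto. apply Finv; auto.
    + replace (/ z + - / (z + 1)) with (/ (z * (z + 1))) by (rewrite <- E; ring).
      apply Rinv_neq_0_compat. apply Rmult_integral_contrapositive; auto.
    + apply Fadd; auto. apply Finv; auto. apply Fneg; auto. apply Finv; auto.
      apply Fadd; auto. apply F1; auto.
    + apply Fneg; auto.
  - replace (/ z + - / (z + 1)) with (/ (z * (z + 1))) by (rewrite <- E; ring).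
    rewrite Rinv_inv. ring.
Qed.

Lemma Fquarter Sg w : degree_ideal Sg -> Sg (cut w) -> Sg (cut (w / 4)).
Proof.
  intros HI Hw. destruct (Req_dec w 0) as [e|n0].
  { subst. replace (0 / 4) with 0 by field. apply F0; auto. }
  replace (w / 4) with (/ (/ w + / w + / w + / w)).
  - assert (Hi : Sg (cut (/ w))) by (apply Finv; auto).
    apply Finv; auto.
    + replace (/ w + / w + / w + / w) with (4 * / w) by ring.
      apply Rmult_integral_contrapositive; split; [lra|]. apply Rinv_neq_0_compat; auto.
    + repeat apply Fadd; auto.
  - replace (/ w + / w + / w + / w) with (4 * / w) by ring.
    rewrite Rinv_mult, Rinv_inv. field.
Qed.

Lemma Fmul Sg x y : degree_ideal Sg -> Sg (cut x) -> Sg (cut y) -> Sg (cut (x * y)).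
Proof.
  intros HI Hx Hy.
  replace (x * y) with (((x + y) * (x + y) + - ((x + - y) * (x + - y))) / 4) by field.
  apply Fquarter; auto. apply Fadd; auto. apply Fsq; auto. apply Fadd; auto.
  apply Fneg; auto. apply Fsq; auto. apply Fadd; auto. apply Fneg; auto.
Qed.

Lemma ideal_subfield Sg : degree_ideal Sg -> is_subfield (reals_of Sg).
Proof.
  intro HI. unfold is_subfield, reals_of.
  split; [apply F0; auto|]. split; [apply F1; auto|].
  split; [intros; apply Fadd; auto|]. split; [intros; apply Fneg; auto|].
  split; [intros; apply Fmul; auto|]. intros; apply Finv; auto.
Qed.

Local Open Scope nat_scope.
Fixpoint NN (D : nat -> Prop) (k : nat) : nat :=
  match k with 0 => 0 | S k => 4 * NN D k + chi D k end.

Lemma chi_le1 D k : chi D k <= 1.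
Proof. destruct (chi_cases D k) as [[_ e]|[_ e]]; rewrite e; lia. Qed.

Lemma NN_lo D m k : 4 ^ k * NN D m <= NN D (k + m).
Proof.
  induction k; simpl; [lia|]. pose proof (chi_le1 D (k + m)). nia.
Qed.

Lemma NN_hi D m k : 3 * NN D (k + m) + 1 <= 4 ^ k * (3 * NN D m + 1).
Proof.
  induction k; simpl; [lia|]. pose proof (chi_le1 D (k + m)). nia.
Qed.

Lemma pow4_pos k : 0 < 4 ^ k.
Proof. apply Nat.neq_0_lt_0, Nat.pow_nonzero; lia. Qed.

Lemma NN_bound D k m : NN D k * (3 * 4 ^ m) <= (3 * NN D m + 1) * 4 ^ k.
Proof.
  destruct (le_lt_dec m k) as [h|h].
  - replace k with ((k - m) + m) by lia. rewrite Nat.pow_add_r.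
    pose proof (NN_hi D m (k - m)). nia.
  - replace m with ((m - k) + k) by lia. rewrite Nat.pow_add_r.
    pose proof (NN_lo D k (m - k)). nia.
Qed.

Local Open Scope R_scope.

Lemma div_le_iff a b c d : 0 < b -> 0 < d -> (a / b <= c / d <-> a * d <= c * b).
Proof.
  intros Hb Hd. split; intro H.
  - destruct (Rle_or_lt (a * d) (c * b)) as [h|h]; auto.
    apply (div_lt_iff c d a b) in h; auto. lra.
  - destruct (Rle_or_lt (a / b) (c / d)) as [h|h]; auto.
    apply (div_lt_iff c d a b) in h; auto. lra.
Qed.

Lemma INR4_pos k : 0 < INR (4 ^ k).
Proof. apply lt_0_INR, pow4_pos. Qed.

Definition Pk D k := INR (NN D k) / INR (4 ^ k).
Definition Uk D k := (3 * INR (NN D k) + 1) / (3 * INR (4 ^ k)).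

Lemma Pk_Uk D k m : Pk D k <= Uk D m.
Proof.
  unfold Pk, Uk. apply div_le_iff. apply INR4_pos. pose proof (INR4_pos m); lra.
  pose proof (NN_bound D k m) as H. apply le_INR in H. repeat rewrite ?mult_INR, ?plus_INR in H.
  simpl INR in H. lra.
Qed.

Definition EP D r := exists k, r = Pk D k.

Lemma EP_bound D : bound (EP D).
Proof. exists (Uk D 0). intros r [k ->]. apply Pk_Uk. Qed.
Lemma EP_ex D : exists r, EP D r.
Proof. exists (Pk D 0). exists 0%nat. reflexivity. Qed.

Definition val D : R := proj1_sig (completeness (EP D) (EP_bound D) (EP_ex D)).

Lemma val_lo D k : Pk D k <= val D.
Proof.
  unfold val. destruct completeness as [v [H1 H2]]. simpl. apply H1. exists k; auto.
Qed.
Lemma val_hi D k : val D <= Uk D k.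
Proof.
  unfold val. destruct completeness as [v [H1 H2]]. simpl. apply H2.
  intros r [j ->]. apply Pk_Uk.
Qed.

Lemma small eps : 0 < eps -> exists k, / INR (4 ^ k) < eps.
Proof.
  intro He. destruct (archimed (/ eps)) as [H1 _].
  assert (Hp : 0 < / eps) by (apply Rinv_0_lt_compat; auto).
  set (N := up (/ eps)) in *. assert (HN : (0 < N)%Z) by (apply lt_IZR; lra).
  exists (Z.to_nat N).
  assert (Hk : INR (Z.to_nat N) < INR (4 ^ Z.to_nat N)) by (apply lt_INR, Nat.pow_gt_lin_r; lia).
  rewrite INR_IZR_INZ, Z2Nat.id in Hk by lia. fold N in Hk.
  pose proof (INR4_pos (Z.to_nat N)).
  rewrite <- (Rinv_inv eps). apply Rinv_lt_contravar. apply Rmult_lt_0_compat; auto. lra.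
Qed.

Lemma Uk_le D k : Uk D k <= (INR (NN D k) + 1) / INR (4 ^ k).
Proof.
  unfold Uk. pose proof (INR4_pos k). apply div_le_iff; try lra; nra.
Qed.

Lemma val_unique D w :
  (forall k, Pk D k <= w <= (INR (NN D k) + 1) / INR (4 ^ k)) -> w = val D.
Proof.
  intro H. destruct (Req_dec w (val D)) as [e|ne]; auto. exfalso.
  destruct (small (Rabs (w - val D))) as [k Hk].
  { apply Rabs_pos_lt; lra. }
  specialize (H k). pose proof (val_lo D k). pose proof (val_hi D k). pose proof (Uk_le D k).
  unfold Pk in *. pose proof (INR4_pos k).
  assert (E : (INR (NN D k) + 1) / INR (4 ^ k) = INR (NN D k) / INR (4 ^ k) + / INR (4 ^ k))
    by (field; lra).
  rewrite E in *. unfold Rabs in Hk. destruct Rcase_abs in Hk; lra.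
Qed.

Definition E0 : nat -> Prop := fun _ => False.

Lemma chi_tj_split A B k :
  chi (tjoin A B) k = (chi (tjoin A E0) k + chi (tjoin E0 B) k)%nat.
Proof.
  unfold chi, tjoin, E0. destruct (Nat.even k);
  repeat destruct excluded_middle_informative; tauto || lia.
Qed.

Lemma NN_split A B k : NN (tjoin A B) k = (NN (tjoin A E0) k + NN (tjoin E0 B) k)%nat.
Proof. induction k; simpl; auto. rewrite IHk, chi_tj_split. lia. Qed.

Lemma val_add A B : val (tjoin A B) = val (tjoin A E0) + val (tjoin E0 B).
Proof.
  symmetry. apply val_unique. intro k.
  pose proof (val_lo (tjoin A E0) k); pose proof (val_lo (tjoin E0 B) k).
  pose proof (val_hi (tjoin A E0) k); pose proof (val_hi (tjoin E0 B) k).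
  unfold Pk, Uk in *. rewrite NN_split, plus_INR.
  pose proof (INR4_pos k).
  set (a := INR (NN (tjoin A E0) k)) in *. set (b := INR (NN (tjoin E0 B) k)) in *.
  set (Q := INR (4 ^ k)) in *.
  assert (e1 : (3 * a + 1) / (3 * Q) = a / Q + / Q / 3) by (field; lra).
  assert (e2 : (3 * b + 1) / (3 * Q) = b / Q + / Q / 3) by (field; lra).
  assert (e3 : (a + b) / Q = a / Q + b / Q) by (field; lra).
  assert (e4 : (a + b + 1) / Q = a / Q + b / Q + / Q) by (field; lra).
  assert (0 < / Q) by (apply Rinv_0_lt_compat; lra).
  rewrite e1 in *; rewrite e2 in *; rewrite e3, e4. lra.
Qed.

Local Open Scope nat_scope.
Definition HALF m n := mk (2 * m + 1) 0 (2 * 4 ^ (S n) - 1).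
Definition Gh O (w : list nat) := chi O (HALF (nth 0 w 0) (nth 1 w 0)).
Local Open Scope R_scope.

Lemma HALF_spec m n : rat_of_nat (HALF m n) = INR (2 * m + 1) / INR (2 * 4 ^ S n).
Proof.
  unfold HALF. rewrite rat_mk. pose proof (pow4_pos (S n)).
  replace (S (2 * 4 ^ S n - 1)) with (2 * 4 ^ S n)%nat by lia.
  change (INR 0) with 0. rewrite Rminus_0_r. reflexivity.
Qed.

Lemma Gh_zero D v : Gh (cut (val D)) (NN D (S (nth 0 v 0%nat)) :: v) = 0%nat.
Proof.
  set (n := nth 0 v 0%nat). set (N := NN D (S n)).
  unfold Gh. cbn [nth]. fold n. apply chi_out. unfold cut. rewrite HALF_spec.
  pose proof (val_hi D (S n)) as H. unfold Uk in H. fold N in H.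
  apply Rle_not_lt. eapply Rle_trans; [exact H|].
  pose proof (INR4_pos (S n)). pose proof (pow4_pos (S n)).
  set (Q := (4 ^ S n)%nat) in *.
  apply div_le_iff; [lra| apply lt_0_INR; lia |].
  repeat rewrite ?mult_INR, ?plus_INR. change (INR 2) with 2. change (INR 1) with 1. nra.
Qed.

Lemma Mu_Gh D n : Mu (Gh (cut (val D))) [n] = NN D (S n).
Proof.
  set (N := NN D (S n)).
  assert (A1 : Gh (cut (val D)) (N :: [n]) = 0%nat) by apply (Gh_zero D [n]).
  assert (A2 : forall m, (m < N)%nat -> Gh (cut (val D)) (m :: [n]) <> 0%nat).
  { intros m Hm. unfold Gh. cbn [nth]. rewrite chi_in. lia. unfold cut. rewrite HALF_spec.
    eapply Rlt_le_trans; [|apply (val_lo D (S n))]. unfold Pk. fold N.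
    pose proof (INR4_pos (S n)). pose proof (pow4_pos (S n)).
    set (Q := (4 ^ S n)%nat) in *.
    apply div_lt_iff; [apply lt_0_INR; lia | lra |].
    assert (Hm' : (2 * m + 1 < 2 * N)%nat) by lia. apply lt_INR in Hm'.
    repeat rewrite ?mult_INR, ?plus_INR in *. change (INR 2) with 2 in *. change (INR 1) with 1 in *. nra. }
  destruct (Mu_spec (Gh (cut (val D))) [n]) as [B1 B2]. { exists N; auto. }
  destruct (lt_eq_lt_dec (Mu (Gh (cut (val D))) [n]) N) as [[h|h]|h]; auto.
  - exfalso; apply (A2 _ h B1).
  - exfalso; apply (B2 _ h A1).
Qed.

Lemma D_le_cut D : turing_le D (cut (val D)).
Proof.
  apply (C_tle _ _ (fun v => 1 - b2n (Nat.even (Mu (Gh (cut (val D))) [nth 0 v 0%nat])))%nat).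
  - apply C_sub. apply C_const. apply C_even. apply C_comp1. apply C_mu.
    unfold Gh. apply C_orac. unfold HALF. Csolve.
    intro v. exists (NN D (S (nth 0 v 0%nat))). apply Gh_zero.
    apply C_proj.
  - intros n h. simpl nth. rewrite Mu_Gh. change (NN D (S n)) with (4 * NN D n + chi D n)%nat. rewrite chi_in by auto.
    rewrite Nat.even_add, Nat.even_mul. reflexivity.
  - intros n h. simpl nth. rewrite Mu_Gh. change (NN D (S n)) with (4 * NN D n + chi D n)%nat. rewrite chi_out by auto.
    rewrite Nat.even_add, Nat.even_mul. reflexivity.
Qed.

Lemma C_NN D O f : turing_le D O -> C O f -> C O (fun v => NN D (f v)).
Proof.
  intros HD Hf. eapply C_ext.
  apply (C_prec O (fun _ => 0%nat) (fun w => 4 * nth 1 w 0%nat + chi D (nth 0 w 0%nat))%nat f []).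
  apply C_zero. apply C_add. apply C_mul. apply C_const. apply C_proj.
  apply C_chi; auto. apply C_proj. auto. auto.
  intro v; cbn [map]. induction (f v). reflexivity. cbn [Rec nth]. rewrite IHn. reflexivity.
Qed.

Local Open Scope nat_scope.
Definition Yv D (w : list nat) :=
  S (Pn (nth 1 w 0) * 4 ^ (nth 0 w 0)) -
  (NN D (nth 0 w 0) * S (Dn (nth 1 w 0)) + Mn (nth 1 w 0) * 4 ^ (nth 0 w 0)).
Definition Nv D (w : list nat) :=
  ((3 * NN D (nth 0 w 0) + 1) * S (Dn (nth 1 w 0)) + 3 * 4 ^ (nth 0 w 0) * Mn (nth 1 w 0)) -
  3 * 4 ^ (nth 0 w 0) * Pn (nth 1 w 0).
Definition Gv D (w : list nat) := Yv D w * Nv D w.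
Local Open Scope R_scope.

Lemma Yv_iff D k n : Yv D (k :: n :: []) = 0%nat <-> rat_of_nat n < Pk D k.
Proof.
  unfold Yv, Pk. cbn [nth]. rewrite rat_dec. rewrite div_lt_iff by (apply INRS_pos || apply INR4_pos).
  split; intro H.
  - assert (H' : (Pn n * 4 ^ k < NN D k * S (Dn n) + Mn n * 4 ^ k)%nat) by lia.
    apply lt_INR in H'. repeat rewrite ?mult_INR, ?plus_INR in H'. lra.
  - assert (H' : (Pn n * 4 ^ k < NN D k * S (Dn n) + Mn n * 4 ^ k)%nat).
    { apply INR_lt. repeat rewrite ?mult_INR, ?plus_INR. lra. }
    lia.
Qed.

Lemma INR3 : INR 3 = 3.
Proof. simpl; lra. Qed.

Lemma Nv_iff D k n : Nv D (k :: n :: []) = 0%nat <-> Uk D k <= rat_of_nat n.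
Proof.
  unfold Nv, Uk. cbn [nth]. rewrite rat_dec.
  pose proof (INR4_pos k) as Q1. pose proof (INRS_pos (Dn n)) as Q2.
  rewrite div_le_iff by lra.
  split; intro H.
  - assert (H' : ((3 * NN D k + 1) * S (Dn n) + 3 * 4 ^ k * Mn n <= 3 * 4 ^ k * Pn n)%nat) by lia.
    apply le_INR in H'. repeat rewrite ?mult_INR, ?plus_INR in H'. rewrite INR3 in *.
    change (INR 1) with 1 in *. nra.
  - assert (H' : ((3 * NN D k + 1) * S (Dn n) + 3 * 4 ^ k * Mn n <= 3 * 4 ^ k * Pn n)%nat).
    { apply INR_le. repeat rewrite ?mult_INR, ?plus_INR. rewrite INR3 in *.
      change (INR 1) with 1 in *. nra. }
    lia.
Qed.

Lemma cut_le_D D : (forall n, rat_of_nat n <> val D) -> turing_le (cut (val D)) D.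
Proof.
  intro Hirr.
  assert (Hv : forall v, Gv D v = Gv D (nth 0 v 0%nat :: nth 1 v 0%nat :: [])).
  { intro v; reflexivity. }
  assert (Hterm : forall v, exists k, Gv D (k :: v) = 0%nat).
  { intro v. set (n := nth 0 v 0%nat). specialize (Hirr n).
    destruct (Rlt_or_le (rat_of_nat n) (val D)) as [h|h].
    - destruct (small (val D - rat_of_nat n)) as [k Hk]; [lra|].
      exists k. rewrite Hv. cbn [nth]. fold n. unfold Gv.
      assert (Yv D [k; n] = 0%nat) as ->; [|lia].
      apply Yv_iff. pose proof (val_hi D k). pose proof (Uk_le D k).
      unfold Pk. pose proof (INR4_pos k).
      assert (E : (INR (NN D k) + 1) / INR (4 ^ k) = INR (NN D k) / INR (4 ^ k) + / INR (4 ^ k))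
        by (field; lra). lra.
    - destruct (small (rat_of_nat n - val D)) as [k Hk]; [lra|].
      exists k. rewrite Hv. cbn [nth]. fold n. unfold Gv.
      assert (Nv D [k; n] = 0%nat) as ->; [|lia].
      apply Nv_iff. pose proof (val_lo D k). pose proof (Uk_le D k).
      unfold Pk in *. pose proof (INR4_pos k).
      assert (E : (INR (NN D k) + 1) / INR (4 ^ k) = INR (NN D k) / INR (4 ^ k) + / INR (4 ^ k))
        by (field; lra). lra. }
  apply (C_tle _ _ (fun v => ifz (Yv D [Mu (Gv D) [nth 0 v 0%nat]; nth 0 v 0%nat]) 1 0)%nat).
  - assert (HD : turing_le D D) by apply tle_refl.
    apply C_ifz; [|apply C_const|apply C_const].
    apply C_comp2; [|apply C_comp1; [apply C_mu|]|]; try apply C_proj; auto.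
    + unfold Yv. apply C_sub. apply C_S, C_mul. apply C_Pn, C_proj. apply C_pow4, C_proj.
      apply C_add; apply C_mul. apply C_NN; auto; apply C_proj. apply C_S, C_Dn, C_proj.
      apply C_Mn, C_proj. apply C_pow4, C_proj.
    + unfold Gv, Yv, Nv. apply C_mul.
      apply C_sub. apply C_S, C_mul. apply C_Pn, C_proj. apply C_pow4, C_proj.
      apply C_add; apply C_mul. apply C_NN; auto; apply C_proj. apply C_S, C_Dn, C_proj.
      apply C_Mn, C_proj. apply C_pow4, C_proj.
      apply C_sub. apply C_add; apply C_mul. apply C_add. apply C_mul. apply C_const.
      apply C_NN; auto; apply C_proj. apply C_const. apply C_S, C_Dn, C_proj.
      apply C_mul. apply C_const. apply C_pow4, C_proj. apply C_Mn, C_proj.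
      apply C_mul. apply C_mul. apply C_const. apply C_pow4, C_proj. apply C_Pn, C_proj.
  - intros n h. simpl nth. unfold cut in h.
    destruct (Mu_spec (Gv D) [n] (Hterm [n])) as [H0 _].
    set (k := Mu (Gv D) [n]) in *.
    destruct (Yv D [k; n]) eqn:E; auto. exfalso.
    unfold Gv in H0. rewrite E in H0.
    assert (Nv D [k; n] = 0%nat) by lia. apply Nv_iff in H.
    pose proof (val_hi D k). lra.
  - intros n h. simpl nth. unfold cut in h.
    destruct (Mu_spec (Gv D) [n] (Hterm [n])) as [H0 _].
    set (k := Mu (Gv D) [n]) in *.
    destruct (Yv D [k; n]) eqn:E; auto. exfalso.
    apply Yv_iff in E. pose proof (val_lo D k). lra.
Qed.

Lemma cut_le_D' D : turing_le (cut (val D)) D.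
Proof.
  destruct (classic (exists n, rat_of_nat n = val D)) as [[n E]|NE].
  - rewrite <- E. apply cut_rat_le.
  - apply cut_le_D. intros n E; apply NE; eauto.
Qed.

Lemma equiv_val D B : turing_le D B -> turing_le B D -> turing_equiv B (cut (val D)).
Proof.
  intros H1 H2. split.
  - eapply tle_trans; [exact H2|]. apply D_le_cut.
  - eapply tle_trans; [apply cut_le_D'|]. exact H1.
Qed.

Lemma equiv_sym A B : turing_equiv A B -> turing_equiv B A.
Proof. intros [h1 h2]; split; auto. Qed.

Lemma subfield_ideal Sg : degree_set Sg -> is_subfield (reals_of Sg) -> degree_ideal Sg.
Proof.
  intros HS [H0 [H1 [Hadd [Hneg [Hmul Hinv]]]]]. unfold reals_of in *.
  split; [exists (cut 0); auto|]. split.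
  - intros A B HA HB.
    assert (SA : Sg (cut (val (tjoin A E0)))).
    { apply (HS A); auto. apply equiv_val. apply tjoin_le. apply tle_refl. apply empty_le.
      apply tjoin_l. }
    assert (SB : Sg (cut (val (tjoin E0 B)))).
    { apply (HS B); auto. apply equiv_val. apply tjoin_le. apply empty_le. apply tle_refl.
      apply tjoin_r. }
    pose proof (Hadd _ _ SA SB) as SAB. rewrite <- val_add in SAB.
    apply (HS _ _ (equiv_sym _ _ (equiv_val (tjoin A B) (tjoin A B) (tle_refl _) (tle_refl _)))).
    exact SAB.
  - intros A B HB HAB.
    assert (SD : Sg (cut (val (tjoin B A)))).
    { apply (HS B); auto. apply equiv_val. apply tjoin_le; auto. apply tle_refl. apply tjoin_l. }
    assert (SB0 : Sg (cut (val (tjoin B E0)))).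
    { apply (HS B); auto. apply equiv_val. apply tjoin_le. apply tle_refl. apply empty_le.
      apply tjoin_l. }
    assert (SA : Sg (cut (val (tjoin E0 A)))).
    { replace (val (tjoin E0 A)) with (val (tjoin B A) + - val (tjoin B E0)).
      apply Hadd; auto. rewrite val_add. ring. }
    apply (HS _ _ (equiv_sym _ _ (equiv_val (tjoin E0 A) A
             (tjoin_le _ _ _ (empty_le _) (tle_refl _)) (tjoin_r _ _)))).
    exact SA.
Qed.

Theorem mainTheorem4 (S : (nat -> Prop) -> Prop) (HS : degree_set S) :
  is_subfield (reals_of S) <-> degree_ideal S.
Proof.
  split.
  - apply subfield_ideal; auto.
  - apply ideal_subfield.
Qed.
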